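(* Let $q=p^k$ be an odd prime power ($p$ prime, $k\ge1$), and let $S$ be a Sylow $p$-subgroup of the symmetric group on $q$ points. Then for every element $s\in S$, there is a complete mapping $f$ of $\mathbb{F}_q$ with $\operatorname{CT}(f)=\operatorname{CT}(s)$.
   Context: A complete mapping of the field $\mathbb{F}_q$ is a permutation $f$ of $\mathbb{F}_q$ such that $x\mapsto f(x)+x$ is also a permutation of $\mathbb{F}_q$. The cycle type $\operatorname{CT}(\sigma)$ of a permutation $\sigma$ of a finite set $\Omega$ is the monomial $x_1^{k_1}\cdots x_{|\Omega|}^{k_{|\Omega|}}$, where $k_\ell$ is the number of cycles of length $\ell$ of $\sigma$. *)

(* Defs.v *)
From HB Require Import structures.
From mathcomp Require Import all_boot all_algebra all_fingroup all_solvable all_field pgroup.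
Set Implicit Arguments. Unset Strict Implicit. Unset Printing Implicit Defensive.
Import GRing.Theory.
Local Open Scope ring_scope.

(* A complete mapping of a finite field F: a permutation f of F such that
   x |-> f x + x is also a permutation (i.e. injective, F being finite). *)
Definition complete_mapping (F : finFieldType) (f : {perm F}) : Prop :=
  injective (fun x : F => f x + x).

Definition cycle_type (T : finType) (s : {perm T}) : nat -> nat :=
  fun l => #|[set X in porbits s | #|X| == l]|%N.

(* Main.v *)
Require Import Defs.
From HB Require Import structures.
From HB Require Import structures.
From mathcomp Require Import all_boot all_algebra all_fingroup all_solvable all_field pgroup.
From Stdlib Require Import FunctionalExtensionality.
Set Implicit Arguments. Unset Strict Implicit. Unset Printing Implicit Defensive.

Section Transport.
Variables (A B : finType).


Lemma transport_exists (s : {perm A}) (h : A -> B) (h' : B -> A) :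
  cancel h h' -> cancel h' h -> {t : {perm B} | forall a, t (h a) = h (s a)}.
Proof.
move=> hK h'K.
have inj : injective (fun b => h (s (h' b))).
  by move=> b1 b2 /= /(can_inj hK) /perm_inj /(can_inj h'K).
by exists (perm inj) => a; rewrite permE hK.
Qed.

Lemma transport_exp (s : {perm A}) (t : {perm B}) (h : A -> B) :
  (forall a, t (h a) = h (s a)) -> forall m a, (t ^+ m)%g (h a) = h ((s ^+ m)%g a).
Proof.
move=> E; elim=> [|m IH] a; first by rewrite !expg0 !perm1.
by rewrite !expgSr !permM IH E.
Qed.

Lemma transport_ct (s : {perm A}) (t : {perm B}) (h : A -> B) (h' : B -> A) :
  cancel h h' -> cancel h' h -> (forall a, t (h a) = h (s a)) ->
  cycle_type t = cycle_type s.
Proof.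
move=> hK h'K E.
have orb : forall a, porbit t (h a) = h @: porbit s a.
  move=> a; apply/setP => y; apply/porbitP/imsetP => [[i ->]|[z /porbitP[i ->] ->]].
    by exists ((s ^+ i)%g a); [exact: mem_porbit | exact: (transport_exp E)].
  by exists i; rewrite (transport_exp E).
have orbs : porbits t = (fun X : {set A} => h @: X) @: porbits s.
  apply/setP => X; apply/imsetP/imsetP => [[b _ ->]|[Y /imsetP[a _ ->] ->]].
    by exists (porbit s (h' b)); [apply: imset_f | rewrite -orb h'K].
  by exists (h a); rewrite ?orb.
have hinj := can_inj hK.
apply: functional_extensionality => l; rewrite /cycle_type orbs.
have -> : [set X in (fun X : {set A} => h @: X) @: porbits s | #|X| == l] =
          (fun X : {set A} => h @: X) @: [set X in porbits s | #|X| == l].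
  apply/setP => X; rewrite inE; apply/andP/imsetP => [[/imsetP[Y YP ->] cY]|[Y]].
    by exists Y; rewrite // inE YP -(card_imset _ hinj).
  by rewrite inE => /andP[YP cY] ->; rewrite imset_f // card_imset.
by rewrite card_imset //; apply: imset_inj.
Qed.

Lemma transport_elt p (s : {perm A}) (t : {perm B}) (h : A -> B) (h' : B -> A) :
  cancel h' h -> (forall a, t (h a) = h (s a)) -> (p.-elt s)%g -> (p.-elt t)%g.
Proof.
move=> h'K E ps.
have e : (t ^+ #[s])%g = 1%g.
  by apply/permP => b; rewrite -[b]h'K (transport_exp E) expg_order !perm1.
apply: pnat_dvd ps; by rewrite order_dvdn e.
Qed.

End Transport.
Section Tri.
Import GRing.Theory.
Local Open Scope ring_scope.
Variables (p n : nat).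
Hypotheses (pr_p : prime p) (odd_p : odd p).
Local Notation V := 'rV['F_p]_n.

Definition agree (i : nat) (x y : V) :=
  [forall j : 'I_n, (j < i)%N ==> (x 0 j == y 0 j)].

Lemma agree_eq (x y : V) :
  (forall i : 'I_n, agree i x y -> x 0 i = y 0 i) -> x = y.
Proof.
move=> H.
have H2 : forall m (i : 'I_n), (i < m)%N -> x 0 i = y 0 i.
  elim=> [|m IH] i // lt_im; apply: H; apply/forallP => j; apply/implyP => lt_ji.
  by apply/eqP/IH; apply: leq_trans lt_ji _.
apply/rowP => i; apply: (H2 n.+1 i); exact: ltnW (ltn_ord i).
Qed.

Lemma agreeW i j x y : agree i x y -> (j <= i)%N -> agree j x y.
Proof.
move=> /forallP a le_ji; apply/forallP => l; apply/implyP => lt_lj.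
by have /implyP := a l; apply; apply: leq_trans lt_lj le_ji.
Qed.

Definition Tset : {set {perm V}} :=
  [set f : {perm V} | [forall x, forall y, forall i : 'I_n,
     agree i x y ==> (f x 0 i - x 0 i == f y 0 i - y 0 i)]].

Lemma TsetP (f : {perm V}) :
  reflect (forall x y (i : 'I_n), agree i x y -> f x 0 i - x 0 i = f y 0 i - y 0 i)
          (f \in Tset).
Proof.
rewrite inE; apply: (iffP forallP) => [H x y i a | H x].
  by have /forallP/(_ y)/forallP/(_ i)/implyP/(_ a)/eqP := H x.
by apply/forallP => y; apply/forallP => i; apply/implyP => a; apply/eqP/H.
Qed.

Lemma two_neq0 : (2%:R : 'F_p) != 0.
Proof.
rewrite -(dvdn_pcharf (pchar_Fp pr_p)); apply/negP => /(dvdn_leq (isT : (0 < 2)%N)) le_p2.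
have gt1 := prime_gt1 pr_p.
have e : p = 2%N by apply/eqP; rewrite eqn_leq le_p2.
by move: odd_p; rewrite e.
Qed.

Lemma T_inj f : f \in Tset -> injective (fun x => f x + x).
Proof.
move=> /TsetP fT x y /= e; apply: agree_eq => i a.
have d := fT x y i a.
have e' : f x 0 i + x 0 i = f y 0 i + y 0 i.
  by have := congr1 (fun v : V => v 0 i) e; rewrite !mxE.
have key : forall a b : 'F_p, (a + b) - (a - b) = 2%:R * b.
  by move=> a0 b0; rewrite opprB addrC addrA subrK mulr_natl mulr2n.
apply: (mulfI two_neq0); rewrite -(key (f x 0 i) (x 0 i)) -(key (f y 0 i) (y 0 i)).
by rewrite e' d.
Qed.

Lemma T_agree f i x y : f \in Tset -> agree i x y -> agree i (f x) (f y).
Proof.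
move=> /TsetP fT a; apply/forallP => j; apply/implyP => lt_ji.
have aj : agree j x y by apply: agreeW a (ltnW lt_ji).
have := fT x y j aj.
have /forallP/(_ j)/implyP/(_ lt_ji)/eqP -> := a.
by move/subIr => ->.
Qed.

Lemma T_group : group_set Tset.
Proof.
apply/group_setP; split.
  by apply/TsetP => x y i _; rewrite !perm1 !subrr.
move=> f g fT gT; apply/TsetP => x y i a.
rewrite !permM.
have key : forall u v w : 'F_p, u - w = (u - v) + (v - w).
  by move=> u v w; rewrite addrA subrK.
rewrite (key _ (f x 0 i)) (key (g (f y) 0 i) (f y 0 i)).
have fT' := elimT (TsetP f) fT; have gT' := elimT (TsetP g) gT.
by rewrite (fT' x y i a) (gT' (f x) (f y) i (T_agree fT a)).
Qed.

Definition Dt := {dffun forall i : 'I_n, {ffun {ffun 'I_i -> 'F_p} -> 'F_p}}.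

Definition restr (i : 'I_n) (x : V) : {ffun 'I_i -> 'F_p} :=
  [ffun j : 'I_i => x 0 (widen_ord (ltnW (ltn_ord i)) j)].

Definition ext (i : 'I_n) (u : {ffun 'I_i -> 'F_p}) : V :=
  \row_(j < n) (if (insub (val j) : option 'I_i) is Some j' then u j' else 0).
Arguments ext : clear implicits.

Lemma restr_ext i u : restr i (ext i u) = u.
Proof.
apply/ffunP => j; rewrite !ffunE mxE.
case: insubP => [j' _ e|]; last by rewrite /= ltn_ord.
by congr (u _); apply: val_inj.
Qed.

Lemma agree_restr (i : 'I_n) x y : agree i x y -> restr i x = restr i y.
Proof.
move=> /forallP a; apply/ffunP => j; rewrite !ffunE.
by have /implyP/(_ (ltn_ord j))/eqP := a (widen_ord (ltnW (ltn_ord i)) j).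
Qed.

Lemma agree_ext (i : 'I_n) x : agree i (ext i (restr i x)) x.
Proof.
apply/forallP => j; apply/implyP => lt_ji; rewrite mxE.
case: insubP => [j' _ e|]; last by rewrite /= lt_ji.
by rewrite ffunE; apply/eqP; congr (x 0 _); apply: val_inj.
Qed.

Definition build (g : Dt) (x : V) : V := \row_(i < n) (x 0 i + g i (restr i x)).

Lemma build_inj g : injective (build g).
Proof.
move=> x y e; apply: agree_eq => i a.
have := congr1 (fun v : V => v 0 i) e; rewrite /= !mxE (agree_restr a).
exact: addIr.
Qed.

Definition bperm g : {perm V} := perm (@build_inj g).

Lemma bpermE g x : bperm g x = build g x.
Proof. exact: permE. Qed.

Lemma bperm_in g : bperm g \in Tset.
Proof.
apply/TsetP => x y i a; rewrite !bpermE !mxE (agree_restr a).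
have key : forall u v : 'F_p, u + v - u = v by move=> u v; rewrite addrC addKr.
by rewrite !key.
Qed.

Lemma bperm_inj : injective bperm.
Proof.
move=> g g' e; apply/ffunP => i; apply/ffunP => u.
have := congr1 (fun f : {perm V} => f (ext i u) 0 i) e.
by rewrite /= !bpermE !mxE restr_ext; apply: addrI.
Qed.

Lemma T_img : Tset = bperm @: [set: Dt].
Proof.
apply/setP => f; apply/idP/imsetP => [fT | [g _ ->]]; last exact: bperm_in.
pose g : Dt := [ffun i : 'I_n => [ffun u : {ffun 'I_i -> 'F_p} => f (ext i u) 0 i - ext i u 0 i]].
exists g; first by rewrite inE.
apply/permP => x; rewrite bpermE; apply/rowP => i; rewrite mxE !ffunE.
move/TsetP: fT => fT; rewrite (fT _ x i (agree_ext i x)).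
by rewrite addrC subrK.
Qed.

Lemma card_T : #|Tset| = (p ^ (\sum_(i < n) p ^ i))%N.
Proof.
rewrite T_img card_imset; last exact: bperm_inj.
rewrite cardsT card_dep_ffun foldrE big_map big_enum /= expn_sum.
apply: eq_bigr => i _.
by rewrite card_ffun card_ffun !card_ord (Fp_cast pr_p).
Qed.

Lemma logn_factpow : logn p (p ^ n)`! = (\sum_(i < n) p ^ i)%N.
Proof.
rewrite logn_fact //.
have n_lt : (n < p ^ n)%N := ltn_expl n (prime_gt1 pr_p).
rewrite (@big_cat_nat _ _ _ n.+1) //=; last by rewrite ltnS ltnW.
have -> : (\sum_(n.+1 <= k < (p ^ n).+1) p ^ n %/ p ^ k = 0)%N.
  rewrite big_nat_cond big1 // => k /andP[/andP[lt_nk _] _]; apply: divn_small.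
  by rewrite ltn_exp2l // prime_gt1.
rewrite addn0.
rewrite big_add1 /= big_nat_rev /= big_mkord.
apply: eq_bigr => i _; rewrite add0n subnSK //.
have le_in : (i <= n)%N by apply: ltnW.
rewrite -{1}(subnKC le_in) expnD mulnK //.
by rewrite expn_gt0 prime_gt0.
Qed.

Lemma T_sylow : (p.-Sylow([set: {perm V}]) (group T_group))%g.
Proof.
rewrite pHallE subsetT /= card_T.
have -> : #|[set: {perm V}]| = (#|V|`!)%N.
  rewrite -cardsT -card_perm; apply: eq_card => s.
  by rewrite !inE; apply/esym/subsetP => x; rewrite inE.
by rewrite card_mx card_Fp // mul1n p_part logn_factpow.
Qed.

End Tri.

Theorem corollary1p4 (p k : nat) (F : finFieldType)
    (S : {group {perm 'I_(p ^ k)}}) :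
  prime p -> (0 < k)%N -> odd (p ^ k) -> #|F| = (p ^ k)%N ->
  (S \in 'Syl_p([set: {perm 'I_(p ^ k)}]))%g ->
  forall s : {perm 'I_(p ^ k)}, s \in S ->
  exists f : {perm F}, complete_mapping f /\ cycle_type f = cycle_type s.
Proof.
move=> pr_p k_gt0 oddq cardF sylS s sS.
have odd_p : odd p.
  by move: oddq; rewrite oddX; case/orP => // /eqP k0; rewrite k0 in k_gt0.
have pS : (p.-group S)%g by move: sylS; rewrite inE => /pHall_pgroup.
have es : (p.-elt s)%g := mem_p_elt pS sS.
have chF : (p \in [pchar F])%R := card_finPcharP cardF pr_p.
have [phi lin_phi [psi phiK psiK]] := pprimeChar_vectAxiom chF.
pose h1 (i : 'I_(p ^ k)) : F := enum_val (cast_ord (esym cardF) i).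
pose h1' (y : F) : 'I_(p ^ k) := cast_ord cardF (enum_rank y).
have h1K : cancel h1 h1' by move=> i; rewrite /h1 /h1' enum_valK cast_ordKV.
have h1'K : cancel h1' h1 by move=> y; rewrite /h1 /h1' cast_ordK enum_rankK.
pose h i := phi (h1 i).
pose h' v := h1' (psi v).
have hK : cancel h h' by move=> i; rewrite /h /h' phiK h1K.
have h'K : cancel h' h by move=> v; rewrite /h /h' h1'K psiK.
have [t Ht] := transport_exists s hK h'K.
have et := transport_elt h'K Ht es.
have [x _ sub] := Sylow_Jsub (@T_sylow p _ pr_p) (subsetT <[t]>%g) et.
set f0 := (t ^ x)%g.
have f0T : f0 \in Tset _ _ by apply: (subsetP sub); rewrite memJ_conjg cycle_id.
have ct0 : cycle_type f0 = cycle_type t.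
  apply: (@transport_ct _ _ t f0 x x^-1%g) => a; [exact: permK | exact: permKV |].
  by rewrite /f0 conjgE !permM permK.
have [f Hf] := transport_exists f0 psiK phiK.
exists f; split; last first.
  by rewrite (transport_ct psiK phiK Hf) ct0 (transport_ct hK h'K Ht).
have phiD : forall u v, phi (u + v)%R = (phi u + phi v)%R.
  by move=> u v; have := lin_phi 1%R u v; rewrite !GRing.scale1r.
have psiD : forall u v, psi (u + v)%R = (psi u + psi v)%R.
  by move=> u v; apply: (can_inj phiK); rewrite phiD !psiK.
move=> y1 y2 /= e.
rewrite -[y1]phiK -[y2]phiK !Hf -!psiD in e.
apply: (can_inj phiK); apply: (@T_inj p _ pr_p odd_p _ f0T).
exact: (can_inj psiK e).
Qed.
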